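(* Let $f\colon X\to Y$ be a continuous function between compact Hausdorff spaces. (1) For every $V\in\mathsf{RO}(Y)$, $\mathrm{int}(\mathrm{cl}(f^{-1}[V]))=\bigvee\{U\in\mathsf{RO}(X)\mid f[\mathrm{cl}(U)]\subseteq V\}$, the join computed in $\mathsf{RO}(X)$. (2) For every $U\in\mathsf{RO}(X)$ and $V\in\mathsf{RO}(Y)$, $f[\mathrm{cl}(U)]\subseteq V$ if and only if there is $V'\in\mathsf{RO}(Y)$ with $\mathrm{cl}(V')\subseteq V$ and $U\subseteq\mathrm{int}(\mathrm{cl}(f^{-1}[V']))$.
   Context: $\mathsf{RO}(X)$ denotes the complete boolean algebra of regular open subsets of $X$ (sets $U$ with $U=\mathrm{int}(\mathrm{cl}(U))$), with joins $\bigvee_i U_i=\mathrm{int}(\mathrm{cl}(\bigcup_i U_i))$. *)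

(* Defs.v *)
From HB Require Import structures.
From mathcomp Require Import all_boot all_order all_algebra.
From mathcomp Require Import all_classical all_reals all_analysis.
Set Implicit Arguments. Unset Strict Implicit. Unset Printing Implicit Defensive.
Local Open Scope classical_set_scope.

Definition regular_open {T : topologicalType} (U : set T) : Prop :=
  U = (closure U)°.

Definition ro_join {T : topologicalType} (F : set (set T)) : set T :=
  (closure (\bigcup_(U in F) U))°.

(* Main.v *)
Require Import Defs.
From HB Require Import structures.
From mathcomp Require Import all_boot all_order all_algebra.
From mathcomp Require Import all_classical all_reals all_analysis.
Local Open Scope classical_set_scope.

Lemma shrink_lem (T : topologicalType) (hT : hausdorff_space T)
  (cT : compact [set: T]) (A B : set T) :
  closed A -> open B -> A `<=` B ->
  exists C, open C /\ A `<=` C /\ closure C `<=` B.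
Proof.
move=> clA oB AB.
have N := compact_normal hT cT.
have sB : set_nbhs A B by apply/set_nbhsP; exists B; split.
have := N A clA B sB; rewrite /filter_from /= => -[D sD clDB].
have [C [oC AC CD]] := (set_nbhsP _ _).1 sD.
exists C; split => //; split => //.
exact: subset_trans (closureS CD) clDB.
Qed.

Arguments shrink_lem {T}.

Lemma closure_pre (X Y : topologicalType) (f : X -> Y) (hf : continuous f)
  (V : set Y) : closure (f @^-1` V) `<=` f @^-1` closure V.
Proof.
move=> x clx B nB.
have [z [Vz Bz]] := clx _ (hf x B nB).
by exists (f z).
Qed.


Lemma regular_open_intcl (T : topologicalType) (O : set T) :
  regular_open ((closure O)°).
Proof.
rewrite /regular_open.
have := @interior_closed_regopen T (closure O) (@closed_closure _ O).
by rewrite /regopen => ->.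
Qed.

Lemma cl_int_cl (T : topologicalType) (A : set T) :
  closure ((closure A)°) `<=` closure A.
Proof.
have e := closureS (@interior_subset _ (closure A)).
by rewrite -(closure_id (closure A)).1 in e; last exact: closed_closure.
Qed.

Theorem proposition6p12 (X Y : topologicalType) (f : X -> Y)
  (hX : compact [set: X]) (hXH : hausdorff_space X)
  (hY : compact [set: Y]) (hYH : hausdorff_space Y)
  (hf : continuous f) :
  (forall V : set Y, regular_open V ->
     (closure (f @^-1` V))° =
     ro_join [set U : set X | regular_open U /\ f @` closure U `<=` V])
  /\
  (forall (U : set X) (V : set Y), regular_open U -> regular_open V ->
     (f @` closure U `<=` V <->
      exists V' : set Y, regular_open V' /\ closure V' `<=` V /\
                         U `<=` (closure (f @^-1` V'))°)).
Proof.
have oRO (T : topologicalType) (U : set T) : regular_open U -> open U.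
  by move=> ->; exact: open_interior.
split.
  move=> V rV; rewrite /ro_join; apply/seteqP; split; apply: interiorS;
    apply: closureS.
    move=> x Vx.
    have s1 : [set f x] `<=` V by move=> y ->; exact: Vx.
    have c1 : closed [set f x].
      exact: (@accessible_closed_set1 _ (@hausdorff_accessible _ hYH) (f x)).
    have o1 : open V by exact: oRO.
    have [V0 [oV0 [V0x clV0]]] := shrink_lem hYH hY _ _ c1 o1 s1.
    have s2 : [set x] `<=` f @^-1` V0 by move=> y -> /=; apply: V0x.
    have c2 : closed [set x].
      exact: (@accessible_closed_set1 _ (@hausdorff_accessible _ hXH) x).
    have o2 : open (f @^-1` V0) by exact: (open_comp (fun z _ => hf z) oV0).
    have [W0 [oO [Ox clO]]] := shrink_lem hXH hX _ _ c2 o2 s2.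
    exists ((closure W0)°).
      split; first exact: regular_open_intcl.
      move=> _ [z zc <-]; apply: clV0; apply: subset_closure; apply: clO.
      have := closureS (@interior_subset _ (closure W0)).
      rewrite -(closure_id (closure W0)).1; last exact: closed_closure.
      by apply.
    have h : W0 `<=` (closure W0)°.
      by rewrite -open_subsetE //; exact: subset_closure.
    by apply: h; apply: Ox.
  move=> x [U [rU fU] Ux]; apply: (fU (f x)); exists x => //.
  exact: subset_closure.
move=> U V rU rV; split.
  move=> fUV.
  have cK : compact (f @` closure U).
    apply: continuous_compact.
      by apply: continuous_subspaceT => z; exact: hf.
    apply: subclosed_compact hX _ => //; exact: closed_closure.
  have [V0 [oV0 [KV0 clV0]]] := shrink_lem hYH hY _ _ (compact_closed hYH cK)
    (oRO _ _ rV) fUV.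
  exists ((closure V0)°); split; first exact: regular_open_intcl.
  split.
    exact: subset_trans (@cl_int_cl _ V0) clV0.
  rewrite rU; apply: interiorS; apply: closureS.
  have h : V0 `<=` (closure V0)°.
    by rewrite -open_subsetE //; exact: subset_closure.
  move=> z Uz /=; apply: h.
  apply: (KV0 (f z)); exists z; [exact: subset_closure | by []].
move=> [W' [rV' [clV' UV']]] y [z zc <-].
apply: clV'; apply: (@closure_pre _ _ f hf W').
have h1 := closureS UV' zc. exact: (@cl_int_cl _ _ z h1).
Qed.
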